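(* Let $\mathbb{X}$ be a real Banach space and let $f\in \mathbb{X}^{**}$ be weak$^*$ continuous. Let $\mathbb{Y}$ be a linear subspace of $\mathbb{X}^{**}$ such that each member of $\mathbb{Y}$ is weak$^*$ continuous and $f\notin \mathbb{Y}$. Suppose that $g_0\in \mathbb{Y}$ is a best approximation to $f$ out of $\mathbb{Y}$. Then for any finite-dimensional subspace $\mathbb{Z}$ of $\mathbb{Y}$ containing $g_0$, $$\|f-g_0\|=\mathrm{dist}(f,\mathbb{Y})=\max \Big\{ |f(x)|: x\in \bigcap_{g\in \mathbb{Z}}\mathcal{N}(g)\cap S_{\mathbb{X}^*}\Big\}.$$
   Context: A functional in $\mathbb{X}^{**}$ is weak$^*$ continuous iff it equals $\psi(x)$ for some $x\in\mathbb{X}$, $\psi$ the canonical embedding. $\mathcal{N}(h)=\{x^*\in\mathbb{X}^*:h(x^* )=0\}$; $S_{\mathbb{X}^*}$ is the unit sphere of $\mathbb{X}^*$; $\mathrm{dist}(f,\mathbb{Y})=\inf_{g\in\mathbb{Y}}\|f-g\|$, and $g_0$ is a best approximation if $\|f-g_0\|=\mathrm{dist}(f,\mathbb{Y})$. *)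

(* Defs.v *)
From HB Require Import structures.
From mathcomp Require Import all_boot all_order all_algebra.
From mathcomp Require Import all_classical all_reals all_analysis.
Set Implicit Arguments. Unset Strict Implicit. Unset Printing Implicit Defensive.
Import Order.TTheory GRing.Theory Num.Theory.
Import numFieldNormedType.Exports.
Local Open Scope classical_set_scope.
Local Open Scope ring_scope.

Section Duals.
Context {R : realType} {X : normedModType R}.

Definition is_dual (phi : X -> R) : Prop :=
  (forall (a : R) (x y : X), phi (a *: x + y) = a * phi x + phi y)
  /\ continuous phi.

Definition dnorm (phi : X -> R) : R :=
  sup [set `|phi x| | x in [set x : X | `|x| <= 1]].

(** X^** : bounded linear functionals on X^*.  Elements are represented as
    functions (X -> R) -> R, normalised to vanish off X^* so that the
    representation is unique. *)
Definition is_bidual (F : (X -> R) -> R) : Prop :=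
  (forall phi, ~ is_dual phi -> F phi = 0)
  /\ (forall (a : R) (phi psi : X -> R), is_dual phi -> is_dual psi ->
        F (fun x => a * phi x + psi x) = a * F phi + F psi)
  /\ (exists M : R, forall phi, is_dual phi -> `|F phi| <= M * dnorm phi).

Definition bnorm (F : (X -> R) -> R) : R :=
  sup [set `|F phi| | phi in [set phi | is_dual phi /\ dnorm phi <= 1]].

Definition canon (x : X) : (X -> R) -> R :=
  fun phi => if `[< is_dual phi >] then phi x else 0.

(** weak* continuous elements of X^** are exactly those of the form psi(x) *)
Definition weakstar_cont (F : (X -> R) -> R) : Prop :=
  is_bidual F /\ exists x : X, F = canon x.

Definition bsubspace (Y : set ((X -> R) -> R)) : Prop :=
  (forall F, Y F -> is_bidual F) /\ Y (fun _ => 0)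
  /\ (forall (a : R) F G, Y F -> Y G -> Y (fun phi => a * F phi + G phi)).

Definition fin_dim_bsubspace (Z : set ((X -> R) -> R)) : Prop :=
  exists (n : nat) (g : 'I_n -> (X -> R) -> R),
    forall F, Z F <-> exists c : 'I_n -> R,
      F = (fun phi => \sum_(i < n) c i * g i phi).

Definition bdiff (F G : (X -> R) -> R) : (X -> R) -> R :=
  fun phi => F phi - G phi.

Definition bdist (F : (X -> R) -> R) (Y : set ((X -> R) -> R)) : R :=
  inf [set bnorm (bdiff F G) | G in Y].

End Duals.

Definition is_max {R : realType} (S : set R) (v : R) : Prop :=
  S v /\ (forall w, S w -> w <= v).

(* Main.v *)
From Pilot Require Import Defs.
From HB Require Import structures.
From mathcomp Require Import all_boot all_order all_algebra.
From mathcomp Require Import all_classical all_reals all_analysis.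
From mathcomp Require Import lra ring.
Import Order.TTheory GRing.Theory Num.Theory.
Import numFieldNormedType.Exports.
Local Open Scope classical_set_scope.
Local Open Scope ring_scope.
Local Notation canon := Pilot.Defs.canon.

Section HBsec.
Context {R : realType} {X : normedModType R}.

Definition good (G : set (X * R)) : Prop :=
  [/\ (forall x r s, G (x, r) -> G (x, s) -> r = s),
      G (0, 0),
      (forall a x r y s, G (x, r) -> G (y, s) -> G (a *: x + y, a * r + s)) &
      (forall x r, G (x, r) -> r <= `|x|)].

Lemma good_scale G a x r : good G -> G (x, r) -> G (a *: x, a * r).
Proof.
case=> _ G00 Glin _ Gxr.
by have := Glin a x r 0 0 Gxr G00; rewrite addr0 addr0.
Qed.

Definition ext_c (G : set (X * R)) x :=
  sup [set t | exists w r, G (w, r) /\ t = r - `|w - x|].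

Lemma good_key G x :
  good G -> forall w r t, G (w, r) -> r + t * ext_c G x <= `|w + t *: x|.
Proof.
move=> gG; have [Gfun G00 Glin Gdom] := gG.
rewrite /ext_c; set L := [set t | _]; set c := sup L.
have ub : forall w2 r2, G (w2, r2) -> ubound L (`|w2 + x| - r2).
  move=> w2 r2 G2 _ [w1 [r1 [G1 ->]]].
  have := Gdom _ _ (Glin 1 _ _ _ _ G1 G2); rewrite !scale1r !mul1r => h.
  have : `|w1 + w2| <= `|w1 - x| + `|w2 + x|.
    have -> : w1 + w2 = (w1 - x) + (w2 + x) by rewrite addrCA subrK addrC.
    exact: ler_normD.
  lra.
have hs : has_sup L.
  split; first by exists (0 - `|0 - x|); exists 0, 0.
  by exists (`|0 + x| - 0); exact: ub.
have cle : forall w2 r2, G (w2, r2) -> c <= `|w2 + x| - r2.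
  move=> w2 r2 G2; apply: ge_sup; first by case: hs.
  exact: ub.
have gec : forall w1 r1, G (w1, r1) -> r1 - `|w1 - x| <= c.
  move=> w1 r1 G1; apply: sup_upper_bound => //; by exists w1, r1.
move=> w r t Gwr.
have [t0|t0|->] := ltgtP t 0; last first.
- by rewrite mul0r addr0 scale0r addr0; exact: Gdom.
- have := cle _ _ (@good_scale _ t^-1 _ _ gG Gwr).
  have -> : `|t^-1 *: w + x| = t^-1 * `|w + t *: x|.
    have -> : t^-1 *: w + x = t^-1 *: (w + t *: x).
      by rewrite scalerDr scalerA mulVf ?lt0r_neq0 // scale1r.
    by rewrite normrZ gtr0_norm ?invr_gt0.
  move=> /(ler_wpM2l (ltW t0)).
  rewrite mulrBr !mulrA divff ?lt0r_neq0 // !mul1r.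
  lra.
- set s := - t.
  have s0 : 0 < s by rewrite /s oppr_gt0.
  have := gec _ _ (@good_scale _ s^-1 _ _ gG Gwr).
  have -> : `|s^-1 *: w - x| = s^-1 * `|w + t *: x|.
    have -> : t = - s by rewrite /s opprK.
    have -> : s^-1 *: w - x = s^-1 *: (w + - s *: x).
      by rewrite scalerDr scaleNr scalerN scalerA mulVf ?lt0r_neq0 // scale1r.
    by rewrite normrZ gtr0_norm ?invr_gt0.
  move=> /(ler_wpM2l (ltW s0)).
  rewrite mulrBr !mulrA divff ?lt0r_neq0 // !mul1r.
  rewrite /s; lra.
Qed.

Definition ext_G (G : set (X * R)) x : set (X * R) :=
  [set p | exists w r t, G (w, r) /\ p = (w + t *: x, r + t * ext_c G x)].

Lemma good_ext G x : good G -> (forall r, ~ G (x, r)) -> good (ext_G G x).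
Proof.
move=> gG nx; have [Gfun G00 Glin Gdom] := gG; set c := ext_c G x.
split.
- move=> v r1 r2 [w1 [s1 [t1 [G1 [-> ->]]]]] [w2 [s2 [t2 [G2 []]]]] e ->.
  have [tE|tN] := eqVneq t1 t2.
    subst t2; move/addIr: e => ew; subst w2.
    by rewrite (Gfun _ _ _ G1 G2).
  exfalso; apply: (nx ((t1 - t2)^-1 * ((-1) * s1 + s2))).
  have := @good_scale _ (t1 - t2)^-1 _ _ gG (Glin (-1) _ _ _ _ G1 G2).
  suff -> : (t1 - t2)^-1 *: ((-1) *: w1 + w2) = x by [].
  have -> : (-1) *: w1 + w2 = (t1 - t2) *: x.
    rewrite scaleN1r scalerBl; apply/eqP; rewrite eq_sym subr_eq; apply/eqP.
    by apply: (addrI w1); rewrite e addrA addrA subrr add0r.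
  by rewrite scalerA mulVf ?scale1r // subr_eq0.
- by exists 0, 0, 0; rewrite scale0r mul0r !addr0.
- move=> a v r v' r' [w1 [s1 [t1 [G1 [-> ->]]]]] [w2 [s2 [t2 [G2 [-> ->]]]]].
  exists (a *: w1 + w2), (a * s1 + s2), (a * t1 + t2); split; first exact: Glin.
  congr (_, _).
    by rewrite scalerDr scalerA scalerDl addrACA.
  ring.
- move=> v r [w [s [t [Gw [-> ->]]]]]; exact: good_key.
Qed.

Lemma hahn_banach (G0 : set (X * R)) : good G0 ->
  exists phi : X -> R,
    [/\ (forall (a : R) x y, phi (a *: x + y) = a * phi x + phi y),
        (forall x, phi x <= `|x|) &
        (forall x r, G0 (x, r) -> phi x = r)].
Proof.
move=> gG0.
pose P := fun G : set (X * R) => G = set0 \/ (good G /\ G0 `<=` G).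
have Pgood : forall G p, P G -> G p -> good G /\ G0 `<=` G.
  move=> G p [->//|//].
have [A [PA Amax]] : exists A, P A /\ forall B, A `<` B -> ~ P B.
  apply: Zorn_bigcup => F FP Ftot.
  have [[G1 FG1 [pt G1p]]|none] := pselect (exists2 G, F G & exists pt, G pt); last first.
    left; apply/seteqP; split => // p [G FG Gp]; apply: none; exists G => //; by exists p.
  right.
  have [gG1 G0G1] := Pgood _ _ (FP _ FG1) G1p.
  have common : forall p q, (\bigcup_(G in F) G) p -> (\bigcup_(G in F) G) q ->
      exists G, [/\ F G, good G, G p & G q].
    move=> p1 q1 [Ga Fa Gap] [Gb Fb Gbq].
    have [ab|ba] := Ftot _ _ Fa Fb.
      exists Gb; split => //; last exact: ab.
      by case: (Pgood _ _ (FP _ Fb) Gbq).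
    exists Ga; split => //; last exact: ba.
    by case: (Pgood _ _ (FP _ Fa) Gap).
  split; last by move=> p /G0G1 ?; exists G1.
  split.
  - move=> x r s hr hs; have [G [_ [gf _ _ _] Gr Gs]] := common _ _ hr hs.
    exact: gf Gr Gs.
  - by exists G1 => //; case: gG1.
  - move=> a x r y s hr hs; have [G [FG [_ _ gl _] Gr Gs]] := common _ _ hr hs.
    by exists G => //; exact: gl.
  - move=> x r [G FG Gr]; have [[_ _ _ gd] _] := Pgood _ _ (FP _ FG) Gr.
    exact: gd.
have [gA G0A] : good A /\ G0 `<=` A.
  case: PA => [A0|//]; exfalso; apply: (Amax G0); last by right; split.
  rewrite A0; split; first by [].
  by move=> /(_ (0, 0)) h; case: gG0 => _ h0 _ _; exact: h h0.
have [Afun A00 Alin Adom] := gA.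
have total : forall x, exists r, A (x, r).
  move=> x; apply: contrapT => nx.
  have nx' : forall r, ~ A (x, r) by move=> r Ar; apply: nx; exists r.
  apply: (Amax (ext_G A x)); last first.
    right; split; first exact: good_ext.
    move=> p /G0A Ap; exists p.1, p.2, 0; split; first by case: p Ap.
    by rewrite scale0r mul0r !addr0; case: p {Ap}.
  split.
    move=> [w r] Ap; exists w, r, 0; split => //.
    by rewrite scale0r mul0r !addr0.
  move=> /(_ (x, ext_c A x)) h; apply: (nx' (ext_c A x)); apply: h.
  by exists 0, 0, 1; split => //; rewrite scale1r mul1r !add0r.
pose phi x := xget 0 [set r | A (x, r)].
have Aphi : forall x, A (x, phi x) by move=> x; exact: (xgetPex 0 (total x)).
exists phi; split.
- move=> a x y; apply: (Afun (a *: x + y)); first exact: Aphi.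
  exact: Alin.
- move=> x; exact: Adom.
- move=> x r /G0A Ar; exact: Afun (Aphi x) Ar.
Qed.

End HBsec.
Section Lin.
Context {R : realType} {X : normedModType R}.

Definition islin (phi : X -> R) := forall (a : R) (x y : X), phi (a *: x + y) = a * phi x + phi y.

Lemma lin0 (phi : X -> R) : islin phi -> phi 0 = 0.
Proof. move=> h; have := h 1 0 0; rewrite scale1r addr0 mul1r; lra. Qed.

Lemma linZ phi a x : islin phi -> phi (a *: x) = a * phi x.
Proof. move=> h; have := h a x 0; rewrite addr0 lin0 // addr0 => ->. by []. Qed.

Lemma linD phi x y : islin phi -> phi (x + y) = phi x + phi y.
Proof. move=> h; have := h 1 x y; rewrite scale1r mul1r. by []. Qed.

Lemma linN phi x : islin phi -> phi (- x) = - phi x.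
Proof. by move=> h; rewrite -scaleN1r linZ // mulN1r. Qed.

Lemma linB phi x y : islin phi -> phi (x - y) = phi x - phi y.
Proof. by move=> h; rewrite linD // linN. Qed.

Lemma lin_bound_abs (phi : X -> R) : islin phi -> (forall x, phi x <= `|x|) ->
  forall x, `|phi x| <= `|x|.
Proof.
move=> h b x; rewrite ler_norml; apply/andP; split; last exact: b.
by have := b (- x); rewrite linN // normrN; lra.
Qed.

Lemma dual_bounded (phi : X -> R) : is_dual phi ->
  exists M, 0 < M /\ forall x, `|phi x| <= M * `|x|.
Proof.
move=> [h c].
have H : \forall t \near (0 : X), `|phi 0 - phi t| < 1.
  by apply: cvgr_dist_lt => //; exact: c.
rewrite lin0 // in H; have := (nbhs_norm0P).1 H; move=> [e /= e0 he].
exists (2 / e); split; first by rewrite divr_gt0.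
move=> x; have [->|x0] := eqVneq x 0; first by rewrite lin0 // !normr0 mulr0.
have nx : 0 < `|x| by rewrite normr_gt0.
have hx : `|(e / 2 / `|x|) *: x| < e.
  rewrite normrZ gtr0_norm ?divr_gt0 // divfK ?lt0r_neq0 //; lra.
have := he _ hx; rewrite sub0r normrN linZ // normrM gtr0_norm ?divr_gt0 // => /ltW h1.
rewrite -(ler_pM2l (_ : 0 < e / 2 / `|x|)) ?divr_gt0 //.
apply: (le_trans h1); rewrite le_eqVlt; apply/orP; left; apply/eqP. field.
by rewrite !lt0r_neq0.
Qed.

Lemma lin_bounded_dual (phi : X -> R) M : islin phi -> (forall x, `|phi x| <= M * `|x|) -> is_dual phi.
Proof.
move=> h b; split => //.
move=> x; apply/cvgrPdist_lt => e e0.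
have M1 : 0 < `|M| + 1 by rewrite ltr_pwDr // normr_ge0.
have H : \forall z \near x, `|x - z| < e / (`|M| + 1).
  by apply: cvgr_dist_lt; [exact: cvg_id | exact: divr_gt0].
apply: filterS H => z hz.
rewrite -linB //; apply: (le_lt_trans (b _)).
apply: (@le_lt_trans _ _ ((`|M| + 1) * `|x - z|)).
  apply: ler_wpM2r; first exact: normr_ge0.
  by rewrite (le_trans (ler_norm _)) // lerDl.
by rewrite -ltr_pdivlMl // mulrC.
Qed.

Lemma dnorm_has_sup (phi : X -> R) : is_dual phi ->
  has_sup [set `|phi x| | x in [set x : X | `|x| <= 1]].
Proof.
move=> d; have [M [M0 hM]] := dual_bounded _ d.
split; first by exists `|phi 0|, 0 => //=; rewrite normr0.
exists M => _ [x /= x1 <-]; apply: (le_trans (hM x)).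
by rewrite ler_piMr // ltW.
Qed.

Lemma dnorm_ge0 (phi : X -> R) : is_dual phi -> 0 <= dnorm phi.
Proof.
move=> d; rewrite /dnorm; apply: (le_trans (normr_ge0 (phi 0))).
by apply: sup_upper_bound; [exact: dnorm_has_sup | exists 0 => //=; rewrite normr0].
Qed.

Lemma dnorm_bound (phi : X -> R) v : is_dual phi -> `|phi v| <= dnorm phi * `|v|.
Proof.
move=> d; have [h _] := d.
have [->|v0] := eqVneq v 0; first by rewrite lin0 // !normr0 mulr0.
have nv : 0 < `|v| by rewrite normr_gt0.
have : `|phi (`|v|^-1 *: v)| <= dnorm phi.
  apply: sup_upper_bound; first exact: dnorm_has_sup.
  exists (`|v|^-1 *: v) => //=.
  by rewrite normrZ normrV ?unitfE ?lt0r_neq0 // normr_id mulVf ?lt0r_neq0.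
rewrite linZ // normrM normrV ?unitfE ?lt0r_neq0 // normr_id.
by rewrite ler_pdivrMl // mulrC.
Qed.

Lemma dnorm_le (phi : X -> R) c : (forall x, `|x| <= 1 -> `|phi x| <= c) -> dnorm phi <= c.
Proof.
move=> h; apply: ge_sup; first by exists `|phi 0|, 0 => //=; rewrite normr0.
by move=> _ [x /= x1 <-]; exact: h.
Qed.

Lemma canon_dual (v : X) (phi : X -> R) : is_dual phi -> canon v phi = phi v.
Proof. by move=> d; rewrite /canon asboolT. Qed.

Lemma canonB (x y : X) : bdiff (canon x) (canon y) = canon (x - y).
Proof.
apply/funext => phi; rewrite /bdiff /canon; case: asboolP => [[h _]|_].
  by rewrite linB.
by rewrite subr0.
Qed.

Lemma zero_dual : is_dual (fun _ : X => (0 : R)).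
Proof. split; [by move=> *; rewrite mulr0 addr0 | exact: cst_continuous]. Qed.

Lemma bnorm_has_sup (v : X) : has_sup [set `|canon v phi| | phi in
   [set phi : X -> R | is_dual phi /\ dnorm phi <= 1]].
Proof.
split.
  exists `|canon v (fun _ => 0)|, (fun _ => 0) => //; split; first exact: zero_dual.
  by apply: dnorm_le => x _; rewrite normr0.
exists `|v| => _ [phi [d n1] <-]; rewrite canon_dual //.
apply: (le_trans (dnorm_bound _ v d)); rewrite ler_piMl //.
Qed.

Lemma bnorm_ge (v : X) (phi : X -> R) : is_dual phi -> dnorm phi <= 1 -> `|phi v| <= bnorm (canon v).
Proof.
move=> d n1; rewrite -(canon_dual v _ d); apply: sup_upper_bound; first exact: bnorm_has_sup.
by exists phi.
Qed.

Lemma bnorm_ge0 (v : X) : 0 <= bnorm (canon v).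
Proof.
apply: (le_trans _ (bnorm_ge v _ zero_dual _)); first exact: normr_ge0.
by apply: dnorm_le => x _; rewrite normr0.
Qed.

Lemma bnorm_le (v : X) : bnorm (canon v) <= `|v|.
Proof.
apply: ge_sup; first by case: (bnorm_has_sup v).
move=> _ [phi [d n1] <-]; rewrite canon_dual //.
apply: (le_trans (dnorm_bound _ v d)); rewrite ler_piMl //.
Qed.

End Lin.

Theorem theorem4p3 (R : realType) (X : completeNormedModType R)
  (f : (X -> R) -> R) (Y : set ((X -> R) -> R)) (g0 : (X -> R) -> R) :
  weakstar_cont f ->
  bsubspace Y ->
  (forall g, Y g -> weakstar_cont g) ->
  ~ Y f ->
  Y g0 -> bnorm (bdiff f g0) = bdist f Y ->
  forall Z : set ((X -> R) -> R),
    fin_dim_bsubspace Z -> Z `<=` Y -> Z g0 ->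
    bnorm (bdiff f g0) = bdist f Y /\
    is_max [set `|f phi| | phi in
              [set phi : X -> R | (forall g, Z g -> g phi = 0)
                                  /\ is_dual phi /\ dnorm phi = 1]]
           (bdist f Y).
Proof.
move=> [_ [x0 ->]] _ Ywc nYf Yg0 hD Z [n [g hZ]] ZY Zg0.
split; first exact: hD.
have Zg : forall i, Z (g i).
  move=> i; apply/hZ; exists (fun j => (j == i)%:R); apply/funext => phi.
  rewrite (bigD1 i) //= eqxx mul1r big1 ?addr0 // => j /negbTE ->; by rewrite mul0r.
have [z hz] : {z : 'I_n -> X & forall i, g i = canon (z i)}.
  apply: (@choice _ _ (fun i w => g i = canon w)) => i; have [_ [w ->]] := Ywc _ (ZY _ (Zg i)); by exists w.
pose Z0 v := exists c : 'I_n -> R, v = \sum_(i < n) c i *: z i.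
have sum_canon : forall c : 'I_n -> R,
    (fun phi => \sum_(i < n) c i * g i phi) = canon (\sum_(i < n) c i *: z i).
  move=> c; apply/funext => phi; rewrite /canon; case: asboolP => [d|nd].
    have [h _] := d.
    apply: (big_rec2 (fun a b => a = phi b)); first by rewrite lin0.
    by move=> i a b _ ->; rewrite hz canon_dual // h.
  by rewrite big1 // => i _; rewrite hz /canon (asboolF nd) mulr0.
have ZZ0 : forall F, Z F -> exists2 v, Z0 v & F = canon v.
  move=> F /hZ [c ->]; exists (\sum_(i < n) c i *: z i); [by exists c | exact: sum_canon].
have Z0Z : forall v, Z0 v -> Z (canon v).
  move=> v [c ->]; apply/hZ; exists c; by rewrite sum_canon.
have Z0lin : forall a u w, Z0 u -> Z0 w -> Z0 (a *: u + w).
  move=> a u w [c ->] [c' ->]; exists (fun i => a * c i + c' i).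
  rewrite scaler_sumr -big_split /=; apply: eq_bigr => i _; by rewrite scalerDl scalerA.
have Z00 : Z0 0 by exists (fun _ => 0); rewrite big1 // => i _; rewrite scale0r.
have [v0 Z0v0 eg0] := ZZ0 _ Zg0.
have nZ0x0 : ~ Z0 x0 by move=> /Z0Z /ZY.
set D := bdist (canon x0) Y.
have hD' : D = bnorm (canon (x0 - v0)) by rewrite /D -hD eg0 canonB.
have Dle : forall w, Z0 w -> D <= `|x0 - w|.
  move=> w Zw; apply: le_trans (bnorm_le (x0 - w)).
  rewrite /D /bdist; apply: ge_inf.
    exists 0 => _ [G YG <-]; have [_ [u ->]] := Ywc _ YG; rewrite canonB; exact: bnorm_ge0.
  exists (canon w); [exact: ZY _ (Z0Z _ Zw) | by rewrite canonB].
set v := x0 - v0.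
have v_neq0 : v != 0.
  apply/eqP => h; apply: nZ0x0; move/eqP: h; rewrite subr_eq0 => /eqP ->; exact: Z0v0.
have nv : 0 < `|v| by rewrite normr_gt0.
have gL : good [set p | exists t : R, p = (t *: v, t * `|v|)].
  split.
  - move=> x r s [t1 [ex1 ->]] [t2 [ex2 ->]].
    have : (t1 - t2) *: v = 0 by rewrite scalerBl -ex1 -ex2 subrr.
    move/eqP; rewrite scaler_eq0 (negbTE v_neq0) orbF subr_eq0 => /eqP -> //.
  - by exists 0; rewrite scale0r mul0r.
  - move=> a x r y s [t1 [-> ->]] [t2 [-> ->]]; exists (a * t1 + t2).
    congr (_, _); [by rewrite scalerDl scalerA | ring].
  - move=> x r [t [-> ->]]; rewrite normrZ ler_wpM2r ?normr_ge0 //; exact: ler_norm.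
have [psi [psil psib psiG]] := hahn_banach _ gL.
have psiv : psi v = `|v| by apply: psiG; exists 1; rewrite scale1r mul1r.
have dpsi : is_dual psi.
  apply: (lin_bounded_dual psi 1 psil) => x; rewrite mul1r; exact: lin_bound_abs.
have npsi : dnorm psi <= 1.
  apply: dnorm_le => x x1; apply: le_trans x1; exact: lin_bound_abs.
have Dpos : 0 < D.
  rewrite hD'; apply: lt_le_trans nv _; have := bnorm_ge v psi dpsi npsi.
  by rewrite psiv normr_id.
have gM : good [set p | exists w t, Z0 w /\ p = (w + t *: x0, t * D)].
  split.
  - move=> x r s [w1 [t1 [Z1 [e1 ->]]]] [w2 [t2 [Z2 [e2 ->]]]].
    have [->//|tN] := eqVneq t1 t2.
    exfalso; apply: nZ0x0.
    have e : w1 + t1 *: x0 = w2 + t2 *: x0 by rewrite -e1 -e2.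
    have E : (-1) *: w1 + w2 = (t1 - t2) *: x0.
      rewrite scaleN1r scalerBl; apply: (addIr (t2 *: x0)).
      by rewrite subrK -addrA -e addrA addNr add0r.
    have Ex : x0 = (t1 - t2)^-1 *: ((-1) *: w1 + w2) + 0.
      by rewrite addr0 E scalerA mulVf ?scale1r // subr_eq0.
    by rewrite Ex; exact: (Z0lin _ _ _ (Z0lin _ _ _ Z1 Z2) Z00).
  - by exists 0, 0; split => //; rewrite scale0r addr0 mul0r.
  - move=> a x r y s [w1 [t1 [Z1 [-> ->]]]] [w2 [t2 [Z2 [-> ->]]]].
    exists (a *: w1 + w2), (a * t1 + t2); split; first exact: Z0lin.
    congr (_, _); [by rewrite scalerDr scalerA scalerDl addrACA | ring].
  - move=> x r [w [t [Zw [-> ->]]]].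
    have [t0|t0] := ltrP 0 t; last first.
      have h : t * D <= 0 by nra.
      exact: le_trans h (normr_ge0 _).
    have := Dle _ (Z0lin (- t^-1) _ _ Zw Z00); rewrite addr0.
    have -> : x0 - (- t^-1) *: w = t^-1 *: (w + t *: x0).
      by rewrite scalerDr scalerA mulVf ?lt0r_neq0 // scale1r scaleNr opprK addrC.
    rewrite normrZ gtr0_norm ?invr_gt0 // => /(ler_wpM2l (ltW t0)).
    by rewrite mulrA divff ?lt0r_neq0 // mul1r.
have [phi [phil phib phiG]] := hahn_banach _ gM.
have phix0 : phi x0 = D.
  by apply: phiG; exists 0, 1; split => //; rewrite add0r scale1r mul1r.
have phiZ : forall w, Z0 w -> phi w = 0.
  by move=> w Zw; apply: phiG; exists w, 0; split => //; rewrite scale0r addr0 mul0r.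
have dphi : is_dual phi.
  apply: (lin_bounded_dual phi 1 phil) => x; rewrite mul1r; exact: lin_bound_abs.
have nphi : dnorm phi <= 1.
  apply: dnorm_le => x x1; apply: le_trans x1; exact: lin_bound_abs.
have n1 : dnorm phi = 1.
  apply/eqP; rewrite eq_le nphi /= leNgt; apply/negP => c1.
  have c0 : 0 < dnorm phi.
    have := dnorm_bound _ x0 dphi; rewrite phix0 gtr0_norm // => h.
    rewrite lt_def dnorm_ge0 // andbT; apply/eqP => c0; move: h; rewrite c0 mul0r; lra.
  set c := dnorm phi in c1 c0 *.
  pose phi' := fun x => c^-1 * phi x.
  have phi'l : islin phi' by move=> a x y; rewrite /phi' phil; ring.
  have phi'b : forall x, `|phi' x| <= 1 * `|x|.
    move=> x; rewrite /phi' normrM gtr0_norm ?invr_gt0 // mul1r mulrC ler_pdivrMr //.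
    rewrite mulrC; exact: dnorm_bound.
  have dphi' := lin_bounded_dual phi' 1 phi'l phi'b.
  have nphi' : dnorm phi' <= 1.
    by apply: dnorm_le => x x1; apply: le_trans (phi'b x) _; rewrite mul1r.
  have := bnorm_ge v phi' dphi' nphi'; rewrite -hD' /phi' /v linB // phix0 phiZ // subr0.
  rewrite normrM gtr0_norm ?invr_gt0 // gtr0_norm // mulrC ler_pdivrMr // => h.
  nra.
split.
- exists phi; last by rewrite canon_dual // phix0 gtr0_norm.
  split; last by split.
  move=> G /ZZ0 [w Zw ->]; by rewrite canon_dual // phiZ.
- move=> _ [psi' [annih [d' n']] <-].
  rewrite canon_dual //.
  have h0 : psi' v0 = 0 by have := annih _ Zg0; rewrite eg0 canon_dual.
  rewrite -[psi' x0]subr0 -h0 -linB; last by case: d'.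
  rewrite hD'; apply: bnorm_ge => //; by rewrite n'.
Qed.
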